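(* Let $c\in\mathbb{R}\setminus\{0\}$ and let $\boldsymbol\eta_c:\mathbb{R}^2\to\mathbb{R}^2$ be $$\boldsymbol\eta_c(u,v)=\bigl(u^2-v^2,\ -2uv+4cv\bigr).$$ Let $\mathbf y=(s_1,s_2)$ be a point in the four-image region of $\boldsymbol\eta_c$, i.e. the equation $\boldsymbol\eta_c(\mathbf x)=\mathbf y$ has exactly four distinct solutions $\mathbf x_1,\dots,\mathbf x_4\in\mathbb{R}^2$, each with $\det(\mathrm{Jac}\,\boldsymbol\eta_c)(\mathbf x_i)\neq 0$. Then the signed magnifications $\mu_i=1/\det(\mathrm{Jac}\,\boldsymbol\eta_c)(\mathbf x_i)$ satisfy $$\mu_1+\mu_2+\mu_3+\mu_4=0.$$ Explicitly, $\det(\mathrm{Jac}\,\boldsymbol\eta_c)(u,v)=8cu-4(u^2+v^2)$, so $\sum_{i=1}^4 \frac{1}{8cu_i-4(u_i^2+v_i^2)}=0$ where $\mathbf x_i=(u_i,v_i)$.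
   Context: This map is the universal quantitative form of a one-parameter family of gravitational lensing maps near an elliptic umbilic caustic. The four-image region is the bounded region enclosed by the caustic curve $s_1=2c^2\cos\phi(1+\cos\phi)$, $s_2=2c^2\sin\phi(1-\cos\phi)$, $\phi\in[0,2\pi)$; sources in its interior have exactly four preimages. *)

(* Defs.v *)
From Stdlib Require Import Reals Lra.
Open Scope R_scope.

Definition eta1 (c u v : R) : R := u^2 - v^2.
Definition eta2 (c u v : R) : R := -2*u*v + 4*c*v.

(* Entries of the Jacobian matrix of eta_c (its partial derivatives). *)
Definition d1eta1 (c u v : R) : R := 2*u.
Definition d2eta1 (c u v : R) : R := -2*v.
Definition d1eta2 (c u v : R) : R := -2*v.
Definition d2eta2 (c u v : R) : R := -2*u + 4*c.

Definition jacdet (c u v : R) : R :=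
  d1eta1 c u v * d2eta2 c u v - d2eta1 c u v * d1eta2 c u v.

Definition is_preimage (c s1 s2 u v : R) : Prop :=
  eta1 c u v = s1 /\ eta2 c u v = s2.

(* Main.v *)
Require Import Defs.
From Stdlib Require Import Reals Lra Psatz.
Open Scope R_scope.
Lemma prod0 x y : x <> 0 -> x * y = 0 -> y = 0.
Proof. intros H H'. destruct (Rmult_integral _ _ H') as [h|h]; [contradiction|exact h]. Qed.
Lemma cubic0 a b c d x1 x2 x3 x4 :
  x1 <> x2 -> x1 <> x3 -> x1 <> x4 -> x2 <> x3 -> x2 <> x4 -> x3 <> x4 ->
  a*x1^3+b*x1^2+c*x1+d = 0 -> a*x2^3+b*x2^2+c*x2+d = 0 ->
  a*x3^3+b*x3^2+c*x3+d = 0 -> a*x4^3+b*x4^2+c*x4+d = 0 ->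
  a = 0 /\ b = 0 /\ c = 0 /\ d = 0.
Proof.
  intros d12 d13 d14 d23 d24 d34 H1 H2 H3 H4.
  assert (E12 : a*(x1^2+x1*x2+x2^2)+b*(x1+x2)+c = 0).
  { apply (prod0 (x1-x2)). lra. lra. }
  assert (E13 : a*(x1^2+x1*x3+x3^2)+b*(x1+x3)+c = 0).
  { apply (prod0 (x1-x3)). lra. lra. }
  assert (E14 : a*(x1^2+x1*x4+x4^2)+b*(x1+x4)+c = 0).
  { apply (prod0 (x1-x4)). lra. lra. }
  assert (F3 : a*(x1+x2+x3)+b = 0).
  { apply (prod0 (x2-x3)). lra. lra. }
  assert (F4 : a*(x1+x2+x4)+b = 0).
  { apply (prod0 (x2-x4)). lra. lra. }
  assert (A : a = 0). { apply (prod0 (x3-x4)). lra. lra. }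
  subst a. assert (b = 0) by lra. subst b. assert (c=0) by lra. subst c. lra.
Qed.

Definition Pp c s1 s2 u := 4*u^4 - 16*c*u^3 + (16*c^2 - 4*s1)*u^2 + 16*c*s1*u - 16*c^2*s1 - s2^2.
Definition dPp c s1 u := 16*u^3 - 48*c*u^2 + 2*(16*c^2-4*s1)*u + 16*c*s1.
Lemma Pzero c s1 s2 u v : is_preimage c s1 s2 u v -> Pp c s1 s2 u = 0.
Proof. unfold is_preimage, eta1, eta2, Pp. intros [<- <-]. ring. Qed.
Lemma dPj c s1 s2 u v : is_preimage c s1 s2 u v -> jacdet c u v * (4*c-2*u) = dPp c s1 u.
Proof. unfold is_preimage, eta1, eta2, dPp, jacdet, d1eta1, d2eta1, d1eta2, d2eta2. intros [<- <-]. ring. Qed.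

Lemma gen c s1 s2 u1 v1 u2 v2 u3 v3 u4 v4 :
  s2 <> 0 ->
  is_preimage c s1 s2 u1 v1 -> is_preimage c s1 s2 u2 v2 ->
  is_preimage c s1 s2 u3 v3 -> is_preimage c s1 s2 u4 v4 ->
  (u1, v1) <> (u2, v2) -> (u1, v1) <> (u3, v3) -> (u1, v1) <> (u4, v4) ->
  (u2, v2) <> (u3, v3) -> (u2, v2) <> (u4, v4) -> (u3, v3) <> (u4, v4) ->
  jacdet c u1 v1 <> 0 -> jacdet c u2 v2 <> 0 ->
  jacdet c u3 v3 <> 0 -> jacdet c u4 v4 <> 0 ->
  / jacdet c u1 v1 + / jacdet c u2 v2 + / jacdet c u3 v3 + / jacdet c u4 v4 = 0.
Proof.
  intros s20 H1 H2 H3 H4 n12 n13 n14 n23 n24 n34 J1 J2 J3 J4.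
  assert (W : forall u v, is_preimage c s1 s2 u v -> v * (4*c-2*u) = s2).
  { unfold is_preimage, eta2. intros u v [_ h]. lra. }
  assert (Wn : forall u v, is_preimage c s1 s2 u v -> 4*c-2*u <> 0).
  { intros u v h e. apply s20. rewrite <- (W u v h), e. ring. }
  assert (D : forall ui vi uj vj, is_preimage c s1 s2 ui vi -> is_preimage c s1 s2 uj vj ->
     (ui,vi) <> (uj,vj) -> ui <> uj).
  { intros ui vi uj vj hi hj n e. subst uj. apply n. f_equal.
    pose proof (W _ _ hi). pose proof (W _ _ hj). pose proof (Wn _ _ hi).
    assert (vi - vj = 0) by (apply (prod0 (4*c-2*ui)); [assumption|]; lra). lra. }
  pose proof (D _ _ _ _ H1 H2 n12) as d12.
  pose proof (D _ _ _ _ H1 H3 n13) as d13.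
  pose proof (D _ _ _ _ H1 H4 n14) as d14.
  pose proof (D _ _ _ _ H2 H3 n23) as d23.
  pose proof (D _ _ _ _ H2 H4 n24) as d24.
  pose proof (D _ _ _ _ H3 H4 n34) as d34.
  set (e1 := u1+u2+u3+u4).
  set (e2 := u1*u2+u1*u3+u1*u4+u2*u3+u2*u4+u3*u4).
  set (e3 := u1*u2*u3+u1*u2*u4+u1*u3*u4+u2*u3*u4).
  set (e4 := u1*u2*u3*u4).
  assert (K : forall u, Pp c s1 s2 u = 0 -> (-16*c+4*e1)*u^3 + (16*c^2-4*s1-4*e2)*u^2
     + (16*c*s1+4*e3)*u + (-16*c^2*s1 - s2^2 - 4*e4) = 4*(u-u1)*(u-u2)*(u-u3)*(u-u4)*(-1)).
  { intros u hu. rewrite <- (Rplus_0_r (_ * (-1))). rewrite <- hu. unfold Pp, e1, e2, e3, e4. ring. }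
  pose proof (K _ (Pzero _ _ _ _ _ H1)) as K1.
  pose proof (K _ (Pzero _ _ _ _ _ H2)) as K2.
  pose proof (K _ (Pzero _ _ _ _ _ H3)) as K3.
  pose proof (K _ (Pzero _ _ _ _ _ H4)) as K4.
  assert (Z : forall x y z, (x - x)*y*z = 0) by (intros; ring).
  destruct (cubic0 (-16*c+4*e1) (16*c^2-4*s1-4*e2) (16*c*s1+4*e3) (-16*c^2*s1 - s2^2 - 4*e4)
     u1 u2 u3 u4 d12 d13 d14 d23 d24 d34) as [A [B [C _]]].
  1-4: match goal with K : ?l = _ |- ?l = 0 => rewrite K; ring end.
  assert (Dv : forall u, 3*(-16*c+4*e1)*u^2 + 2*(16*c^2-4*s1-4*e2)*u + (16*c*s1+4*e3) = 0 ->
     dPp c s1 u = 4*((u-u2)*(u-u3)*(u-u4) + (u-u1)*(u-u3)*(u-u4) + (u-u1)*(u-u2)*(u-u4) + (u-u1)*(u-u2)*(u-u3))).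
  { intros u hu. rewrite <- (Rplus_0_r (4*_)). rewrite <- hu. unfold dPp, e1, e2, e3, e4. ring. }
  assert (Q : forall u, 3*(-16*c+4*e1)*u^2 + 2*(16*c^2-4*s1-4*e2)*u + (16*c*s1+4*e3) = 0).
  { intro u. rewrite A, B, C. ring. }
  pose proof (dPj _ _ _ _ _ H1) as G1. rewrite (Dv _ (Q _)) in G1.
  pose proof (dPj _ _ _ _ _ H2) as G2. rewrite (Dv _ (Q _)) in G2.
  pose proof (dPj _ _ _ _ _ H3) as G3. rewrite (Dv _ (Q _)) in G3.
  pose proof (dPj _ _ _ _ _ H4) as G4. rewrite (Dv _ (Q _)) in G4.
  pose proof (Wn _ _ H1). pose proof (Wn _ _ H2). pose proof (Wn _ _ H3). pose proof (Wn _ _ H4).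
  assert (R : forall J w p, J <> 0 -> w <> 0 -> J * w = p -> / J = w / p).
  { intros J w p hJ hw hp. subst p. field. split; assumption. }
  assert (u1 - u2 <> 0) by (apply Rminus_eq_contra; auto). assert (u1 - u3 <> 0) by (apply Rminus_eq_contra; auto). assert (u1 - u4 <> 0) by (apply Rminus_eq_contra; auto).
  assert (u2 - u3 <> 0) by (apply Rminus_eq_contra; auto). assert (u2 - u4 <> 0) by (apply Rminus_eq_contra; auto). assert (u3 - u4 <> 0) by (apply Rminus_eq_contra; auto).

  assert (G1' : jacdet c u1 v1 * (4*c-2*u1) = 4*((u1-u2)*(u1-u3)*(u1-u4))) by (rewrite G1; ring).
  assert (G2' : jacdet c u2 v2 * (4*c-2*u2) = 4*((u2-u1)*(u2-u3)*(u2-u4))) by (rewrite G2; ring).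
  assert (G3' : jacdet c u3 v3 * (4*c-2*u3) = 4*((u3-u1)*(u3-u2)*(u3-u4))) by (rewrite G3; ring).
  assert (G4' : jacdet c u4 v4 * (4*c-2*u4) = 4*((u4-u1)*(u4-u2)*(u4-u3))) by (rewrite G4; ring).
  clear K K1 K2 K3 K4 Z Dv Q A B C G1 G2 G3 G4 D W Wn.
  rewrite (R _ _ _ J1 H G1'), (R _ _ _ J2 H0 G2'), (R _ _ _ J3 H5 G3'), (R _ _ _ J4 H6 G4').
  assert (u2 - u1 <> 0) by (apply Rminus_eq_contra; auto). assert (u3 - u1 <> 0) by (apply Rminus_eq_contra; auto). assert (u4 - u1 <> 0) by (apply Rminus_eq_contra; auto).
  assert (u3 - u2 <> 0) by (apply Rminus_eq_contra; auto). assert (u4 - u2 <> 0) by (apply Rminus_eq_contra; auto). assert (u4 - u3 <> 0) by (apply Rminus_eq_contra; auto).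
  field. repeat split; assumption.
Qed.

Lemma sq3 x y z : x^2 = y^2 -> x^2 = z^2 -> x <> y -> x <> z -> y <> z -> False.
Proof.
  intros h1 h2 a b d.
  assert (E1 : (x-y)*(x+y) = 0) by lra. assert (E2 : (x-z)*(x+z) = 0) by lra.
  destruct (Rmult_integral _ _ E1); [apply a; lra|].
  destruct (Rmult_integral _ _ E2); [apply b; lra|]. apply d; lra.
Qed.
Lemma tri_v c s1 s2 a1 a2 a3 :
  is_preimage c s1 s2 a1 0 -> is_preimage c s1 s2 a2 0 -> is_preimage c s1 s2 a3 0 ->
  (a1,0) <> (a2,0) -> (a1,0) <> (a3,0) -> (a2,0) <> (a3,0) -> False.
Proof.
  unfold is_preimage, eta1. intros [h1 _] [h2 _] [h3 _] n1 n2 n3.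
  apply (sq3 a1 a2 a3); try lra; intro e; subst; auto.
Qed.
Lemma tri_u c s1 s2 b1 b2 b3 :
  is_preimage c s1 s2 (2*c) b1 -> is_preimage c s1 s2 (2*c) b2 -> is_preimage c s1 s2 (2*c) b3 ->
  (2*c,b1) <> (2*c,b2) -> (2*c,b1) <> (2*c,b3) -> (2*c,b2) <> (2*c,b3) -> False.
Proof.
  unfold is_preimage, eta1. intros [h1 _] [h2 _] [h3 _] n1 n2 n3.
  apply (sq3 b1 b2 b3); try lra; intro e; subst; auto.
Qed.
Lemma pair c s1 s2 a1 a2 b1 b2 :
  is_preimage c s1 s2 a1 0 -> is_preimage c s1 s2 a2 0 ->
  is_preimage c s1 s2 (2*c) b1 -> is_preimage c s1 s2 (2*c) b2 ->
  (a1,0) <> (a2,0) -> (2*c,b1) <> (2*c,b2) ->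
  jacdet c a1 0 <> 0 -> jacdet c a2 0 <> 0 ->
  jacdet c (2*c) b1 <> 0 -> jacdet c (2*c) b2 <> 0 ->
  / jacdet c a1 0 + / jacdet c a2 0 + / jacdet c (2*c) b1 + / jacdet c (2*c) b2 = 0.
Proof.
  unfold is_preimage, eta1. intros [h1 _] [h2 _] [h3 _] [h4 _] n1 n2 J1 J2 J3 J4.
  assert (a2 = - a1).
  { assert (E : (a1-a2)*(a1+a2) = 0) by lra. destruct (Rmult_integral _ _ E).
    - exfalso; apply n1; f_equal; lra.
    - lra. }
  assert (b2 = - b1).
  { assert (E : (b1-b2)*(b1+b2) = 0) by lra. destruct (Rmult_integral _ _ E).
    - exfalso; apply n2; f_equal; lra.
    - lra. }
  subst a2 b2.
  revert J1 J2 J3 J4. unfold jacdet, d1eta1, d2eta1, d1eta2, d2eta2. intros J1 J2 J3 J4.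
  assert (a1 <> 0) by (intro e; apply J1; subst; ring).
  assert (b1 <> 0) by (intro e; apply J3; subst; ring).
  assert (4*c - 2*a1 <> 0) by (intro e; apply J1; replace (-2*a1+4*c) with (4*c-2*a1) by ring; rewrite e; ring).
  assert (4*c + 2*a1 <> 0) by (intro e; apply J2; replace (-2*-a1+4*c) with (4*c+2*a1) by ring; rewrite e; ring).
  assert (B : b1^2 = 4*c^2 - a1^2) by lra.
  replace (2 * a1 * (-2 * a1 + 4 * c) - -2 * 0 * (-2 * 0)) with (2*a1*(4*c-2*a1)) by ring.
  replace (2 * -a1 * (-2 * -a1 + 4 * c) - -2 * 0 * (-2 * 0)) with (-(2*a1*(4*c+2*a1))) by ring.
  replace (2 * (2 * c) * (-2 * (2 * c) + 4 * c) - -2 * b1 * (-2 * b1)) with (-4*b1^2) by ring.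
  replace (2 * (2 * c) * (-2 * (2 * c) + 4 * c) - -2 * -b1 * (-2 * -b1)) with (-4*b1^2) by ring.
  rewrite B. assert (4*c^2-a1^2 <> 0) by (rewrite <- B; apply pow_nonzero; auto).
  field. repeat split; auto.
Qed.


Lemma split0 c s1 u v : is_preimage c s1 0 u v -> v = 0 \/ u = 2*c.
Proof. unfold is_preimage, eta2. intros [_ h].
  assert (E : v*(4*c-2*u) = 0) by lra. destruct (Rmult_integral _ _ E); [left|right]; lra. Qed.

Theorem theorem1 (c s1 s2 u1 v1 u2 v2 u3 v3 u4 v4 : R) :
  c <> 0 ->
  (* four preimages *)
  is_preimage c s1 s2 u1 v1 -> is_preimage c s1 s2 u2 v2 ->
  is_preimage c s1 s2 u3 v3 -> is_preimage c s1 s2 u4 v4 ->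
  (* pairwise distinct *)
  (u1, v1) <> (u2, v2) -> (u1, v1) <> (u3, v3) -> (u1, v1) <> (u4, v4) ->
  (u2, v2) <> (u3, v3) -> (u2, v2) <> (u4, v4) -> (u3, v3) <> (u4, v4) ->
  (* and they are all the preimages *)
  (forall u v : R, is_preimage c s1 s2 u v ->
     (u, v) = (u1, v1) \/ (u, v) = (u2, v2) \/ (u, v) = (u3, v3) \/ (u, v) = (u4, v4)) ->
  (* nondegenerate *)
  jacdet c u1 v1 <> 0 -> jacdet c u2 v2 <> 0 ->
  jacdet c u3 v3 <> 0 -> jacdet c u4 v4 <> 0 ->
  / jacdet c u1 v1 + / jacdet c u2 v2 + / jacdet c u3 v3 + / jacdet c u4 v4 = 0.
Proof.
  intros c0 H1 H2 H3 H4 n12 n13 n14 n23 n24 n34 _ J1 J2 J3 J4.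
  destruct (Req_dec s2 0) as [s20|s20].
  - subst s2.
    destruct (split0 _ _ _ _ H1) as [e1|e1]; subst;
    destruct (split0 _ _ _ _ H2) as [e2|e2]; subst;
    destruct (split0 _ _ _ _ H3) as [e3|e3]; subst;
    destruct (split0 _ _ _ _ H4) as [e4|e4]; subst; first [ exfalso; exact (tri_v c s1 0 u1 u2 u3 H1 H2 H3 n12 n13 n23) | exfalso; exact (tri_u c s1 0 v1 v2 v3 H1 H2 H3 n12 n13 n23) | exfalso; exact (tri_v c s1 0 u1 u2 u4 H1 H2 H4 n12 n14 n24) | exfalso; exact (tri_u c s1 0 v1 v2 v4 H1 H2 H4 n12 n14 n24) | exfalso; exact (tri_v c s1 0 u1 u3 u4 H1 H3 H4 n13 n14 n34) | exfalso; exact (tri_u c s1 0 v1 v3 v4 H1 H3 H4 n13 n14 n34) | exfalso; exact (tri_v c s1 0 u2 u3 u4 H2 H3 H4 n23 n24 n34) | exfalso; exact (tri_u c s1 0 v2 v3 v4 H2 H3 H4 n23 n24 n34) | (pose proof (pair c s1 0 u1 u2 v3 v4 H1 H2 H3 H4 n12 n34 J1 J2 J3 J4); lra) | (pose proof (pair c s1 0 u1 u3 v2 v4 H1 H3 H2 H4 n13 n24 J1 J3 J2 J4); lra) | (pose proof (pair c s1 0 u1 u4 v2 v3 H1 H4 H2 H3 n14 n23 J1 J4 J2 J3); lra) | (pose proof (pair c s1 0 u2 u3 v1 v4 H2 H3 H1 H4 n23 n14 J2 J3 J1 J4); lra) | (pose proof (pair c s1 0 u2 u4 v1 v3 H2 H4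 H1 H3 n24 n13 J2 J4 J1 J3); lra) | (pose proof (pair c s1 0 u3 u4 v1 v2 H3 H4 H1 H2 n34 n12 J3 J4 J1 J2); lra) ].
  - exact (gen c s1 s2 u1 v1 u2 v2 u3 v3 u4 v4 s20 H1 H2 H3 H4 n12 n13 n14 n23 n24 n34 J1 J2 J3 J4).
Qed.
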